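(* Let $\varepsilon>0$ with $1/\varepsilon$ an integer, let $n$ be a positive integer, and let $I$ be a set of at most $n$ items packed in a horizontal (respectively vertical) container $C$. Then for every integer $k\ge1/\varepsilon$ there is a set $I'\subseteq I$ with $p(I')\ge(1-\varepsilon)p(I)$ that can be packed in a horizontal (respectively vertical) container $C'$ with $w(C')\le w(C)$, $h(C')\le h(C)$, $w(C')\in WIDTHS(I)^{(k)}$ and $h(C')\in HEIGHTS(I)^{(k)}$.
   Context: Items are axis-parallel rectangles with width $w_i$, height $h_i$, profit $p(i)\ge0$; no rotations. A horizontal container is a box in which items are stacked one on top of another (their projections on the $y$-axis have pairwise disjoint interiors); a vertical container is a box in which items are placed side by side (their projections on the $x$-axis have pairwise disjoint interiors). $WIDTHS(I)=\{w_j: j\in I\}$, $HEIGHTS(I)=\{h_j:j\in I\}$. For a finite set $P$ of reals and integer $k\ge0$, $P^{(k)}=\{(p_1+\dots+p_l)+i\,p_{l+1}: p_1,\dots,p_{l+1}\in P,\ 0\le l\le k,\ i\in\{0,1,\dots,n\}\}$. *)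

(* Defs.v *)
From Stdlib Require Import Reals List.
Import ListNotations.
Open Scope R_scope.

Inductive orient := Horizontal | Vertical.

Definition sumR {T : Type} (f : T -> R) (l : list T) : R :=
  fold_right (fun j acc => f j + acc) 0 l.

Definition profit {T : Type} (p : T -> R) (I : list T) : R := sumR p I.

(* The items of I (with widths w, heights h) can be packed in a container
   of the given orientation with width W and height H: every item is placed
   (no rotation) inside the box [0,W]x[0,H]; in a horizontal container the
   y-projections of distinct items have pairwise disjoint interiors, in a
   vertical container the x-projections do.  (For positive lengths, the open
   intervals (a,a+s) and (b,b+t) are disjoint iff a+s <= b or b+t <= a.) *)
Definition packed_in {T : Type} (o : orient) (w h : T -> R) (I : list T)
    (W H : R) : Prop :=
  exists x y : T -> R,
    (forall i, In i I ->
       0 <= x i /\ x i + w i <= W /\ 0 <= y i /\ y i + h i <= H) /\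
    (forall i j, In i I -> In j I -> i <> j ->
       match o with
       | Horizontal => y i + h i <= y j \/ y j + h j <= y i
       | Vertical => x i + w i <= x j \/ x j + w j <= x i
       end).

Definition WIDTHS {T : Type} (w : T -> R) (I : list T) (r : R) : Prop :=
  exists j, In j I /\ w j = r.
Definition HEIGHTS {T : Type} (h : T -> R) (I : list T) (r : R) : Prop :=
  exists j, In j I /\ h j = r.

Definition Pk (P : R -> Prop) (k n : nat) (r : R) : Prop :=
  exists (ps : list R) (q : R) (i : nat),
    (length ps <= k)%nat /\ Forall P ps /\ P q /\ (i <= n)%nat /\
    r = fold_right Rplus 0 ps + INR i * q.

(* Main.v *)
Require Import Defs.
From Stdlib Require Import Reals List Permutation Lra Lia ClassicalEpsilon Arith.
Import ListNotations.
Open Scope R_scope.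

Lemma sumR_app {T} (f : T -> R) l1 l2 : sumR f (l1 ++ l2) = sumR f l1 + sumR f l2.
Proof. induction l1; simpl; [lra|]. rewrite IHl1; lra. Qed.

Lemma sumR_perm {T} (f : T -> R) l l' : Permutation l l' -> sumR f l = sumR f l'.
Proof. induction 1; simpl; lra. Qed.

Lemma sumR_nonneg {T} (f : T -> R) l : (forall x, 0 <= f x) -> 0 <= sumR f l.
Proof. intros H; induction l; simpl; [lra|]. specialize (H a); lra. Qed.

Lemma sumR_ge {T} (f : T -> R) c l : (forall x, In x l -> c <= f x) -> c * INR (length l) <= sumR f l.
Proof.
  induction l; intros H; [simpl; lra|].
  change (length (a :: l)) with (S (length l)). rewrite S_INR.
  change (sumR f (a :: l)) with (f a + sumR f l). assert (c <= f a) by (apply H; left; auto).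
  assert (c * INR (length l) <= sumR f l) by (apply IHl; intros; apply H; right; auto). lra.
Qed.

Lemma fold_map {T} (f : T -> R) l : fold_right Rplus 0 (map f l) = sumR f l.
Proof. induction l; simpl; auto. rewrite IHl; auto. Qed.

Lemma argmin {T} (f : T -> R) l : l <> [] -> exists x, In x l /\ forall y, In y l -> f x <= f y.
Proof.
  induction l as [|a l IH]; intros Hne; [congruence|].
  destruct l as [|b l].
  - exists a; split; [left; auto|]. intros y [<-|[]]; lra.
  - destruct IH as [x [Hx Hm]]; [congruence|].
    destruct (Rle_dec (f a) (f x)).
    + exists a; split; [left; auto|]. intros y [<-|Hy]; [lra|]. specialize (Hm y Hy); lra.
    + exists x; split; [right; auto|]. intros y [<-|Hy]; [lra|]. auto.
Qed.

Lemma argmax {T} (f : T -> R) l : l <> [] -> exists x, In x l /\ forall y, In y l -> f y <= f x.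
Proof.
  intros H. destruct (argmin (fun x => - f x) l H) as [x [Hx Hm]].
  exists x; split; auto. intros y Hy; specialize (Hm y Hy); lra.
Qed.

Lemma stack_bound {T} (h y : T -> R) (hh : forall j, 0 < h j) :
  forall N (L : list T), (length L <= N)%nat -> NoDup L -> forall B, 0 <= B ->
  (forall i, In i L -> 0 <= y i /\ y i + h i <= B) ->
  (forall i j, In i L -> In j L -> i <> j -> y i + h i <= y j \/ y j + h j <= y i) ->
  sumR h L <= B.
Proof.
  induction N; intros L HL HN B HB Hin Hd.
  - destruct L; simpl in *; [lra|lia].
  - destruct L as [|a L0]; [simpl; lra|].
    destruct (argmax y (a :: L0)) as [e [He Hm]]; [congruence|].
    destruct (in_split _ _ He) as [l1 [l2 Heq]]. rewrite Heq in *.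
    assert (Hnd := NoDup_remove_1 _ _ _ HN).
    assert (Hni := NoDup_remove_2 _ _ _ HN).
    assert (Hs : sumR h (l1 ++ e :: l2) = h e + sumR h (l1 ++ l2)).
    { rewrite !sumR_app; simpl; lra. }
    rewrite Hs.
    assert (Hin' : forall x, In x (l1 ++ l2) -> In x (l1 ++ e :: l2)).
    { intros x Hx; apply in_app_or in Hx; apply in_or_app; destruct Hx; [left|right;right]; auto. }
    assert (Hye := Hin e He).
    assert (sumR h (l1 ++ l2) <= y e).
    { apply IHN.
      - rewrite length_app in *; simpl in HL; lia.
      - auto.
      - lra.
      - intros i Hi. split; [apply Hin; auto|].
        assert (Hne : i <> e) by (intros ->; contradiction).
        destruct (Hd i e (Hin' i Hi) He Hne) as [H1|H1]; auto.
        assert (y i <= y e) by (apply Hm; auto). exfalso.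
        assert (Hyi := Hin i (Hin' i Hi)). specialize (hh e). lra.
      - intros i j Hi Hj Hij. apply Hd; auto. }
    lra.
Qed.

Lemma stack_build {T} (h : T -> R) (hh : forall j, 0 < h j) (L : list T) :
  NoDup L -> exists y : T -> R,
  (forall i, In i L -> 0 <= y i /\ y i + h i <= sumR h L) /\
  (forall i j, In i L -> In j L -> i <> j -> y i + h i <= y j \/ y j + h j <= y i).
Proof.
  induction 1 as [|a L Hna HnL IH].
  - exists (fun _ => 0); split; intros; simpl in *; contradiction.
  - destruct IH as [y [H1 H2]].
    assert (Hs0 : 0 <= sumR h L) by (apply sumR_nonneg; intros; apply Rlt_le; auto).
    exists (fun i => if excluded_middle_informative (i = a) then sumR h L else y i).
    change (sumR h (a :: L)) with (h a + sumR h L).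
    split.
    + intros i [Hai|Hi].
      * subst i. destruct (excluded_middle_informative (a = a)) as [_|C]; [|congruence].
        split; [lra|]. lra.
      * destruct (excluded_middle_informative (i = a)) as [->|Ha]; [contradiction|].
        specialize (H1 i Hi); specialize (hh a); lra.
    + intros i j Hi Hj Hij.
      destruct (excluded_middle_informative (i = a)) as [->|Ha];
      destruct (excluded_middle_informative (j = a)) as [->|Hb]; try congruence.
      * destruct Hj as [->|Hj]; [congruence|]. right; specialize (H1 j Hj); lra.
      * destruct Hi as [->|Hi]; [congruence|]. left; specialize (H1 i Hi); lra.
      * destruct Hi as [->|Hi]; [congruence|]. destruct Hj as [->|Hj]; [congruence|].
        auto.
Qed.

Lemma select {T} (h : T -> R) : forall s (L : list T), (s <= length L)%nat ->
  exists A B, Permutation L (A ++ B) /\ length A = s /\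
  forall a b, In a A -> In b B -> h b <= h a.
Proof.
  induction s; intros L Hs.
  - exists [], L; split; [apply Permutation_refl|]; split; auto. intros a b [].
  - destruct (IHs L ltac:(lia)) as [A [B [HP [HA Hm]]]].
    assert (HlB : (length B >= 1)%nat).
    { apply Permutation_length in HP. rewrite length_app in HP. lia. }
    destruct (argmax h B) as [e [He Hme]]; [destruct B; simpl in *; [lia|congruence]|].
    destruct (in_split _ _ He) as [b1 [b2 Heq]]. subst B.
    exists (A ++ [e]), (b1 ++ b2). split; [|split].
    + eapply Permutation_trans; [exact HP|]. rewrite <- app_assoc.
      apply Permutation_app_head. simpl. apply Permutation_sym, Permutation_middle.
    + rewrite length_app; simpl; lia.
    + intros a b Ha Hb.
      assert (Hb' : In b (b1 ++ e :: b2)).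
      { apply in_app_or in Hb; apply in_or_app; destruct Hb; [left|right;right]; auto. }
      apply in_app_or in Ha. destruct Ha as [Ha|[<-|[]]]; auto.
Qed.

Lemma ceil_lemma {T} (h : T -> R) (q : R) (hq : 0 <= q) (hh0 : forall x, 0 <= h x) : forall B : list T,
  (forall b, In b B -> h b <= q) ->
  exists i : nat, (i <= length B)%nat /\ sumR h B <= INR i * q <= sumR h B + q.
Proof.
  induction B as [|b B IH]; intros Hb.
  - exists 0%nat; simpl; split; [lia|lra].
  - destruct IH as [i [Hi [H1 H2]]]; [intros; apply Hb; right; auto|].
    assert (hb : h b <= q) by (apply Hb; left; auto).
    change (sumR h (b :: B)) with (h b + sumR h B).
    destruct (Rle_dec (h b + sumR h B) (INR i * q)).
    + exists i; simpl length; split; [lia|]. specialize (hh0 b); lra.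
    + exists (S i); simpl length; split; [lia|]. rewrite S_INR. lra.
Qed.

Lemma core (eps : R) (heps : 0 < eps)
  (hinv : exists m : nat, / eps = INR m)
  (n : nat) (hn : (0 < n)%nat)
  (T : Type) (w h p : T -> R)
  (hw : forall j, 0 < w j) (hh : forall j, 0 < h j) (hp : forall j, 0 <= p j)
  (I : list T) (hI : NoDup I) (hIne : I <> nil) (hIn : (length I <= n)%nat)
  (WC HC : R) (hpack : packed_in Horizontal w h I WC HC)
  (k : nat) (hk : / eps <= INR k) :
  exists (I' : list T) (WC' HC' : R),
    NoDup I' /\ incl I' I /\
    profit p I' >= (1 - eps) * profit p I /\
    packed_in Horizontal w h I' WC' HC' /\
    WC' <= WC /\ HC' <= HC /\
    Pk (WIDTHS w I) k n WC' /\ Pk (HEIGHTS h I) k n HC'.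
Proof.
  destruct hpack as [x [y [Hin Hd]]].
  assert (HC0 : 0 <= HC).
  { destruct I as [|i0 I0]; [congruence|]. destruct (Hin i0 (or_introl eq_refl)) as [_ [_ [? ?]]].
    specialize (hh i0); lra. }
  assert (HS : sumR h I <= HC).
  { apply (stack_bound h y hh (length I) I (le_n _) hI HC HC0).
    - intros i Hi; destruct (Hin i Hi) as [_ [_ [? ?]]]; auto.
    - exact Hd. }
  destruct (argmax w I hIne) as [jm [Hjm Hjmax]].
  assert (Hwj : w jm <= WC).
  { destruct (Hin jm Hjm) as [? [? _]]. specialize (hw jm). lra. }
  assert (HPW : Pk (WIDTHS w I) k n (w jm)).
  { exists [], (w jm), 1%nat. split; [simpl; lia|]. split; [constructor|].
    split; [exists jm; auto|]. split; [lia|]. simpl; lra. }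
  assert (Fin : forall I' H', NoDup I' -> incl I' I -> profit p I' >= (1 - eps) * profit p I ->
     sumR h I' <= H' -> H' <= HC -> Pk (HEIGHTS h I) k n H' ->
     exists (I' : list T) (WC' HC' : R),
    NoDup I' /\ incl I' I /\
    profit p I' >= (1 - eps) * profit p I /\
    packed_in Horizontal w h I' WC' HC' /\
    WC' <= WC /\ HC' <= HC /\
    Pk (WIDTHS w I) k n WC' /\ Pk (HEIGHTS h I) k n HC').
  { intros I' H' HnI' Hinc Hpr Hs1 Hs2 HPk.
    exists I', (w jm), H'. split; auto. split; auto. split; auto.
    split; [|auto].
    destruct (stack_build h hh I' HnI') as [y' [Hy1 Hy2]].
    exists (fun _ => 0), y'. split.
    - intros i Hi. destruct (Hy1 i Hi). split; [lra|]. split.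
      + assert (w i <= w jm) by (apply Hjmax; apply Hinc; auto). lra.
      + split; lra.
    - exact Hy2. }
  assert (HPI : 0 <= profit p I) by (apply sumR_nonneg; auto).
  destruct (le_lt_dec (length I) k) as [Hsm|Hbig].
  - apply (Fin I (sumR h I)); auto.
    + intros z; auto.
    + apply Rle_ge. assert (0 <= eps * profit p I) by (apply Rmult_le_pos; lra). lra.
    + lra.
    + destruct I as [|i0 I0]; [congruence|].
      exists (map h (i0 :: I0)), (h i0), 0%nat.
      split; [rewrite length_map; auto|]. split.
      * apply Forall_forall. intros r Hr. apply in_map_iff in Hr.
        destruct Hr as [z [<- Hz]]. exists z; auto.
      * split; [exists i0; split; [left|]; auto|]. split; [lia|].
        rewrite fold_map. simpl INR. lra.
  - destruct hinv as [m0 Hm0].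
    assert (Hm0k : (m0 <= k)%nat) by (apply INR_le; lra).
    assert (Hm0pos : (1 <= m0)%nat).
    { destruct m0; [|lia]. exfalso. simpl in Hm0. assert (0 < / eps) by (apply Rinv_0_lt_compat; lra). lra. }
    destruct (select h m0 I ltac:(lia)) as [A [B [HP [HA Hm]]]].
    destruct (argmin p A) as [r [Hr Hrmin]]; [destruct A; simpl in *; [lia|congruence]|].
    destruct (in_split _ _ Hr) as [a1 [a2 HAeq]]. subst A.
    assert (HP2 : Permutation I (a1 ++ r :: a2 ++ B)) by (rewrite app_comm_cons, app_assoc; auto).
    assert (HnI : NoDup (a1 ++ r :: a2 ++ B)) by (eapply Permutation_NoDup; eauto).
    assert (Hsum : forall f : T -> R, sumR f I = f r + sumR f (a1 ++ a2) + sumR f B).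
    { intros f. rewrite (sumR_perm f _ _ HP2). rewrite !sumR_app. simpl. rewrite sumR_app. lra. }
    assert (HrB : forall b, In b B -> h b <= h r) by (intros; apply Hm; auto).
    destruct (ceil_lemma h (h r) ltac:(specialize (hh r); lra) ltac:(intros z; specialize (hh z); lra) B HrB)
      as [i [Hi [Hc1 Hc2]]].
    assert (HlI : length I = (length a1 + S (length a2) + length B)%nat).
    { rewrite (Permutation_length HP). rewrite !length_app. simpl. lia. }
    apply (Fin (a1 ++ a2 ++ B) (sumR h (a1 ++ a2) + INR i * h r)).
    + exact (NoDup_remove_1 a1 (a2 ++ B) r HnI).
    + intros z Hz. apply (Permutation_in z (Permutation_sym HP2)).
      apply in_app_or in Hz; apply in_or_app; destruct Hz; [left|right;right]; auto.
    + unfold profit. rewrite (Hsum p). rewrite app_assoc, sumR_app.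
      assert (Hge : p r * INR (length (a1 ++ r :: a2)) <= sumR p (a1 ++ r :: a2))
        by (apply sumR_ge; auto).
      rewrite HA in Hge.
      assert (sumR p (a1 ++ r :: a2) = p r + sumR p (a1 ++ a2)) by (rewrite !sumR_app; simpl; lra).
      assert (0 <= sumR p B) by (apply sumR_nonneg; auto).
      assert (Hpr : p r <= eps * profit p I).
      { assert (eps * INR m0 = 1) by (rewrite <- Hm0; field; lra).
        assert (p r = eps * (p r * INR m0)) by (rewrite <- Rmult_assoc, (Rmult_comm eps (p r)), Rmult_assoc; rewrite H1; ring).
        unfold profit. rewrite (Hsum p), H2.
        apply Rmult_le_compat_l; lra. }
      unfold profit in Hpr. rewrite (Hsum p) in Hpr. apply Rle_ge. nra.
    + rewrite app_assoc, sumR_app. lra.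
    + rewrite (Hsum h) in HS. lra.
    + exists (map h (a1 ++ a2)), (h r), i. split; [rewrite length_map, length_app; rewrite length_app in HA; simpl in HA; lia|].
      split.
      * apply Forall_forall. intros z Hz. apply in_map_iff in Hz.
        destruct Hz as [u [<- Hu]]. exists u. split; auto.
        apply (Permutation_in u (Permutation_sym HP2)).
        apply in_app_or in Hu; apply in_or_app; destruct Hu; [left|right;right;apply in_or_app;left]; auto.
      * split; [exists r; split; auto; apply (Permutation_in r (Permutation_sym HP2)); apply in_or_app; right; left; auto|].
        split; [lia|]. rewrite fold_map. auto.
Qed.

Lemma swap_pack {T} (w h : T -> R) I W H :
  packed_in Vertical w h I W H <-> packed_in Horizontal h w I H W.
Proof.
  split; intros [x [y [H1 H2]]]; exists y, x; split;
  try (intros i Hi; destruct (H1 i Hi) as [? [? [? ?]]]; repeat split; auto);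
  intros i j Hi Hj Hij; apply (H2 i j Hi Hj Hij).
Qed.

Theorem mainTheorem17 (eps : R) (heps : 0 < eps)
  (hinv : exists m : nat, / eps = INR m)
  (n : nat) (hn : (0 < n)%nat)
  (T : Type) (w h p : T -> R)
  (hw : forall j, 0 < w j) (hh : forall j, 0 < h j) (hp : forall j, 0 <= p j)
  (I : list T) (hI : NoDup I) (hIne : I <> nil) (hIn : (length I <= n)%nat)
  (o : orient) (WC HC : R) (hpack : packed_in o w h I WC HC)
  (k : nat) (hk : / eps <= INR k) :
  exists (I' : list T) (WC' HC' : R),
    NoDup I' /\ incl I' I /\
    profit p I' >= (1 - eps) * profit p I /\
    packed_in o w h I' WC' HC' /\
    WC' <= WC /\ HC' <= HC /\
    Pk (WIDTHS w I) k n WC' /\ Pk (HEIGHTS h I) k n HC'.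
Proof.
  destruct o.
  - exact (core eps heps hinv n hn T w h p hw hh hp I hI hIne hIn WC HC hpack k hk).
  - apply swap_pack in hpack.
    destruct (core eps heps hinv n hn T h w p hh hw hp I hI hIne hIn HC WC hpack k hk)
      as [I' [a [b [H1 [H2 [H3 [H4 [H5 [H6 [H7 H8]]]]]]]]]].
    exists I', b, a. repeat split; auto. apply swap_pack; auto.
Qed.
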